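(* For every $\Pi^1_1$ sentence $\psi$ (universal second-order sentence) there is an $\mathbf{ID}$ sentence $\phi$ such that for every suitable structure $M$, $M\models\psi$ if and only if $M\models_{\{\emptyset\}}\phi$.
   Context: Fix a first-order signature; structures have non-empty domains. An assignment on $M$ is a function from a finite set of variables into the domain of $M$; $s(a/x)$ agrees with $s$ except that it sends $x$ to $a$. A team $X$ of $M$ is a set of assignments all with the same domain $dom(X)$. For $F:X\to M$, $X(F/x)=\{s(F(s)/x):s\in X\}$; $X(M/x)=\{s(a/x):a\in M,s\in X\}$. Formulas of intuitionistic dependence logic $\mathbf{ID}$: $\phi::=\alpha\mid=\!\!(t)\mid\bot\mid\phi\wedge\phi\mid\phi\veebar\phi\mid\phi\to\phi\mid\forall x\phi\mid\exists x\phi$, with $\alpha$ a first-order atomic formula and $t$ a term; free variables as usual; sentences have none. Team semantics, for $X$ with $dom(X)\supseteq$ free variables: $M\models_X\alpha$ iff $M\models_s\alpha$ for all $s\in X$; $M\models_X=\!\!(t)$ iff $s(t)=s'(t)$ for all $s,s'\in X$; $M\models_X\bot$ iff $X=\emptyset$; $\wedge$ as usual; $M\models_X\phi\veebar\psi$ iff $M\models_X\phi$ or $M\models_X\psi$; $M\models_X\phi\to\psi$ iff for every $Y\subseteq X$, $M\models_Y\phi$ implies $M\models_Y\psi$; $M\models_X\exists x\phi$ iff $M\models_{X(F/x)}\phi$ for some $F:X\to M$; $M\models_X\forall x\phi$ iff $M\models_{X(M/x)}\phi$. $M\models_{\{\emptyset\}}\phi$ means the team consisting only of the empty assignment satisfies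 $\phi$. $M\models\psi$ is standard second-order semantics. *)

(* Defs.v *)
From Stdlib Require Import List Arith Bool.
From Stdlib Require Vectors.Fin.
Import ListNotations.

Record signature := Signature {
  fsym : Type;
  farity : fsym -> nat;      (* constants = function symbols of arity 0 *)
  rsym : Type;
  rarity : rsym -> nat }.

Record structure (S : signature) := Structure {
  dom : Type;
  dom_ne : inhabited dom;
  fint : forall f : fsym S, (Fin.t (farity S f) -> dom) -> dom;
  rint : forall r : rsym S, (Fin.t (rarity S r) -> dom) -> Prop }.
Arguments dom {S}.
Arguments fint {S}.
Arguments rint {S}.

Inductive term (S : signature) :=
| tvar : nat -> term S
| tapp : forall f : fsym S, (Fin.t (farity S f) -> term S) -> term S.
Arguments tvar {S}.
Arguments tapp {S}.

Fixpoint tfv {S} (t : term S) (x : nat) : Prop :=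
  match t with
  | tvar y => y = x
  | tapp f a => exists j, tfv (a j) x
  end.

Inductive atom (S : signature) :=
| AEq : term S -> term S -> atom S
| ARel : forall r : rsym S, (Fin.t (rarity S r) -> term S) -> atom S.
Arguments AEq {S}.
Arguments ARel {S}.

Definition afv {S} (a : atom S) (x : nat) : Prop :=
  match a with
  | AEq t1 t2 => tfv t1 x \/ tfv t2 x
  | ARel r args => exists j, tfv (args j) x
  end.

(* An assignment is a partial function from variables to the domain whose
   domain of definition is { x | s x <> None } (finite for all assignments
   arising in the semantics of sentences, which start from the empty one). *)
Definition assignment {S} (M : structure S) := nat -> option (dom M).
Definition team {S} (M : structure S) := assignment M -> Prop.

Definition empty_assignment {S} (M : structure S) : assignment M :=
  fun _ => None.
Definition empty_team {S} (M : structure S) : team M :=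
  fun s => s = empty_assignment M.

Definition upd {S} {M : structure S} (s : assignment M) (x : nat) (a : dom M)
  : assignment M :=
  fun y => if Nat.eqb y x then Some a else s y.

Definition team_supp {S} {M : structure S} (X : team M) (F : assignment M -> dom M)
  (x : nat) : team M :=
  fun s' => exists s, X s /\ s' = upd s x (F s).
Definition team_dup {S} {M : structure S} (X : team M) (x : nat) : team M :=
  fun s' => exists s a, X s /\ s' = upd s x a.

Fixpoint teval {S} {M : structure S} (s : assignment M) (t : term S) (d : dom M)
  : Prop :=
  match t with
  | tvar y => s y = Some d
  | tapp f a => exists ds : Fin.t (farity S f) -> dom M,
      (forall j, teval s (a j) (ds j)) /\ d = fint M f ds
  end.

Definition atom_holds {S} {M : structure S} (s : assignment M) (a : atom S) : Prop :=
  match a with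
  | AEq t1 t2 => exists d, teval s t1 d /\ teval s t2 d
  | ARel r args => exists ds : Fin.t (rarity S r) -> dom M,
      (forall j, teval s (args j) (ds j)) /\ rint M r ds
  end.

Inductive idform (S : signature) :=
| IAtom : atom S -> idform S
| IDep : term S -> idform S
| IBot : idform S
| IAnd : idform S -> idform S -> idform S
| IOr : idform S -> idform S -> idform S
| IImp : idform S -> idform S -> idform S
| IAll : nat -> idform S -> idform S
| IEx : nat -> idform S -> idform S.
Arguments IAtom {S}. Arguments IDep {S}. Arguments IBot {S}.
Arguments IAnd {S}. Arguments IOr {S}. Arguments IImp {S}.
Arguments IAll {S}. Arguments IEx {S}.

Fixpoint idfv {S} (p : idform S) (x : nat) : Prop :=
  match p with
  | IAtom a => afv a x
  | IDep t => tfv t x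
  | IBot => False
  | IAnd p q | IOr p q | IImp p q => idfv p x \/ idfv q x
  | IAll y p | IEx y p => idfv p x /\ x <> y
  end.

Definition id_sentence {S} (p : idform S) : Prop := forall x, ~ idfv p x.

Fixpoint id_sat {S} (M : structure S) (X : team M) (p : idform S) : Prop :=
  match p with
  | IAtom a => forall s, X s -> atom_holds s a
  | IDep t => forall s s', X s -> X s' ->
      forall d d', teval s t d -> teval s' t d' -> d = d'
  | IBot => forall s, ~ X s
  | IAnd p q => id_sat M X p /\ id_sat M X q
  | IOr p q => id_sat M X p \/ id_sat M X q
  | IImp p q => forall Y : team M, (forall s, Y s -> X s) ->
      id_sat M Y p -> id_sat M Y q
  | IAll x p => id_sat M (team_dup X x) p
  | IEx x p => exists F : assignment M -> dom M, id_sat M (team_supp X F x) p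
  end.

(* Second-order (relation) variables are X^k_i with index i and arity k; an
   atom [SVar i args] uses the variable X^(length args)_i.  A relation of
   arity k is represented as a predicate on lists (only lists of length k
   matter). *)
Inductive soform (S : signature) :=
| SEq : term S -> term S -> soform S
| SRel : forall r : rsym S, (Fin.t (rarity S r) -> term S) -> soform S
| SVar : nat -> list (term S) -> soform S
| SNeg : soform S -> soform S
| SAnd : soform S -> soform S -> soform S
| SOr : soform S -> soform S -> soform S
| SAll : nat -> soform S -> soform S
| SEx : nat -> soform S -> soform S
| SAll2 : nat -> nat -> soform S -> soform S
| SEx2 : nat -> nat -> soform S -> soform S.
Arguments SEq {S}. Arguments SRel {S}. Arguments SVar {S}. Arguments SNeg {S}.
Arguments SAnd {S}. Arguments SOr {S}. Arguments SAll {S}. Arguments SEx {S}.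
Arguments SAll2 {S}. Arguments SEx2 {S}.

Fixpoint sofv {S} (p : soform S) (x : nat) : Prop :=
  match p with
  | SEq t1 t2 => tfv t1 x \/ tfv t2 x
  | SRel r args => exists j, tfv (args j) x
  | SVar i args => exists t, In t args /\ tfv t x
  | SNeg p | SAll2 _ _ p | SEx2 _ _ p => sofv p x
  | SAnd p q | SOr p q => sofv p x \/ sofv q x
  | SAll y p | SEx y p => sofv p x /\ x <> y
  end.

Fixpoint sofv2 {S} (p : soform S) (i k : nat) : Prop :=
  match p with
  | SEq _ _ | SRel _ _ => False
  | SVar j args => j = i /\ length args = k
  | SNeg p | SAll _ p | SEx _ p => sofv2 p i k
  | SAnd p q | SOr p q => sofv2 p i k \/ sofv2 q i k
  | SAll2 j l p | SEx2 j l p => sofv2 p i k /\ (j, l) <> (i, k)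
  end.

Definition so_sentence {S} (p : soform S) : Prop :=
  (forall x, ~ sofv p x) /\ (forall i k, ~ sofv2 p i k).

Fixpoint is_fo {S} (p : soform S) : Prop :=
  match p with
  | SEq _ _ | SRel _ _ | SVar _ _ => True
  | SNeg p | SAll _ p | SEx _ p => is_fo p
  | SAnd p q | SOr p q => is_fo p /\ is_fo q
  | SAll2 _ _ _ | SEx2 _ _ _ => False
  end.

Fixpoint is_pi11 {S} (p : soform S) : Prop :=
  match p with
  | SAll2 _ _ q => is_pi11 q
  | q => is_fo q
  end.

Definition pi11_sentence {S} (p : soform S) : Prop := is_pi11 p /\ so_sentence p.

Fixpoint tev {S} {M : structure S} (v : nat -> dom M) (t : term S) : dom M :=
  match t with
  | tvar y => v y
  | tapp f a => fint M f (fun j => tev v (a j))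
  end.

Definition soval {S} (M : structure S) := nat -> nat -> list (dom M) -> Prop.

Definition updv {S} {M : structure S} (v : nat -> dom M) (x : nat) (a : dom M) :=
  fun y => if Nat.eqb y x then a else v y.
Definition updV {S} {M : structure S} (V : soval M) (i k : nat)
  (R : list (dom M) -> Prop) : soval M :=
  fun j l => if Nat.eqb j i && Nat.eqb l k then R else V j l.

Fixpoint so_holds {S} (M : structure S) (v : nat -> dom M) (V : soval M)
  (p : soform S) : Prop :=
  match p with
  | SEq t1 t2 => tev v t1 = tev v t2
  | SRel r args => rint M r (fun j => tev v (args j))
  | SVar i args => V i (length args) (map (tev v) args)
  | SNeg p => ~ so_holds M v V p
  | SAnd p q => so_holds M v V p /\ so_holds M v V q
  | SOr p q => so_holds M v V p \/ so_holds M v V q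
  | SAll x p => forall a, so_holds M (updv v x a) V p
  | SEx x p => exists a, so_holds M (updv v x a) V p
  | SAll2 i k p => forall R, so_holds M v (updV V i k R) p
  | SEx2 i k p => exists R, so_holds M v (updV V i k R) p
  end.

(* M |= psi for a sentence psi (valuations irrelevant; we quantify over all) *)
Definition so_models {S} (M : structure S) (p : soform S) : Prop :=
  forall (v : nat -> dom M) (V : soval M), so_holds M v V p.

(* Main.v *)
Require Import Defs.
From Stdlib Require Import List Arith Bool Lia.
From Stdlib Require Import Classical ClassicalEpsilon FunctionalExtensionality PropExtensionality.
Import ListNotations.

Module P1.

Section Basics.
Variable Sg : signature.
Variable M : structure Sg.

Lemma team_ext (X Y : team M) : (forall s, X s <-> Y s) -> X = Y.
Proof. intro H. apply functional_extensionality. intro s. apply propositional_extensionality. apply H. Qed.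

Lemma down_closed : forall (p : idform Sg) (X Y : team M),
  (forall s, Y s -> X s) -> id_sat M X p -> id_sat M Y p.
Proof.
  induction p; simpl; intros X Y HYX H.
  - intros s Hs. apply H. auto.
  - intros s s' Hs Hs'. apply H; auto.
  - intros s Hs. apply (H s). auto.
  - destruct H; split; eauto.
  - destruct H; [left|right]; eauto.
  - intros Z HZ. apply H. intros s Hs. auto.
  - apply (IHp (team_dup X n)); auto.
    intros s' [s [a [Hs E]]]. exists s, a. auto.
  - destruct H as [F HF]. exists F. apply (IHp (team_supp X F n)); auto.
    intros s' [s [Hs E]]. exists s. auto.
Qed.

Definition flat (p : idform Sg) (P : assignment M -> Prop) : Prop :=
  forall X : team M, id_sat M X p <-> (forall s, X s -> P s).

Lemma flat_atom a : flat (IAtom a) (fun s => atom_holds s a).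
Proof. intro X. simpl. tauto. Qed.

Lemma flat_bot : flat IBot (fun _ => False).
Proof. intro X. simpl. firstorder. Qed.

Lemma flat_and p q P Q : flat p P -> flat q Q -> flat (IAnd p q) (fun s => P s /\ Q s).
Proof. unfold flat in *. intros Hp Hq X. simpl. rewrite Hp, Hq. firstorder. Qed.

Lemma flat_imp p q P Q : flat p P -> flat q Q -> flat (IImp p q) (fun s => P s -> Q s).
Proof.
  unfold flat in *. intros Hp Hq X. simpl. split.
  - intros H s Hs HP.
    assert (H1 : id_sat M (fun s' => s' = s) q).
    { apply H. intros; subst; auto. apply Hp. intros; subst; auto. }
    exact (proj1 (Hq _) H1 s eq_refl).
  - intros H Y HY HYp. apply Hq. pose proof (proj1 (Hp _) HYp) as HP. intros s Hs. apply H; auto.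
Qed.

Definition itop : idform Sg := IImp IBot IBot.
Lemma flat_top : flat itop (fun _ => True).
Proof. intro X. simpl. firstorder. Qed.

Lemma sat_top X : id_sat M X itop.
Proof. simpl. auto. Qed.

Lemma imp_restrict p q P X : flat p P ->
  (id_sat M X (IImp p q) <-> id_sat M (fun s => X s /\ P s) q).
Proof.
  intros Hp. unfold flat in Hp. simpl. split.
  - intros H. apply H. tauto. apply Hp. tauto.
  - intros H Y HY HYp. pose proof (proj1 (Hp _) HYp) as HP.
    apply (down_closed q (fun s => X s /\ P s)); auto.
Qed.

Fixpoint conjdep (xs : list nat) : idform Sg :=
  match xs with
  | [] => itop
  | x :: xs => IAnd (IDep (tvar x)) (conjdep xs)
  end.
Definition Dep (xs : list nat) (y : nat) : idform Sg := IImp (conjdep xs) (IDep (tvar y)).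

Definition wagree (s s' : assignment M) (x : nat) :=
  forall d d', s x = Some d -> s' x = Some d' -> d = d'.

Lemma conjdep_sem xs (Y : team M) : id_sat M Y (conjdep xs) <->
  (forall s s', Y s -> Y s' -> forall x, In x xs -> wagree s s' x).
Proof.
  induction xs; simpl.
  - split; auto. intros _ s s' _ _ x [].
  - rewrite IHxs. split.
    + intros [H1 H2] s s' Hs Hs' x [<-|Hx].
      * intros d d' E1 E2. exact (H1 s s' Hs Hs' d d' E1 E2).
      * eauto.
    + intros H. split.
      * intros s s' Hs Hs' d d' E1 E2. exact (H s s' Hs Hs' a (or_introl eq_refl) d d' E1 E2).
      * intros s s' Hs Hs' x Hx. eapply H; eauto.
Qed.

Lemma Dep_sem xs y (X : team M) : id_sat M X (Dep xs y) <->
  (forall s s', X s -> X s' -> (forall x, In x xs -> wagree s s' x) -> wagree s s' y).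
Proof.
  unfold Dep. simpl. split.
  - intros H s s' Hs Hs' Hag d d' E1 E2.
    assert (HY : id_sat M (fun t => t = s \/ t = s') (conjdep xs)).
    { apply conjdep_sem. intros t t' [->| ->] [->| ->] x Hx.
      - intros a b E E'. congruence.
      - apply Hag; auto.
      - intros a b E E'. symmetry. eapply Hag; eauto.
      - intros a b E E'. congruence. }
    specialize (H _ (fun t Ht => match Ht with or_introl e => eq_ind_r _ Hs e | or_intror e => eq_ind_r _ Hs' e end) HY).
    exact (H s s' (or_introl eq_refl) (or_intror eq_refl) d d' E1 E2).
  - intros H Y HY HYd s s' Hs Hs'.
    rewrite conjdep_sem in HYd. intros d d' E1 E2. exact (H s s' (HY s Hs) (HY s' Hs') (HYd s s' Hs Hs') d d' E1 E2).

Qed.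

End Basics.

End P1.
Import P1.

Module P2.

Section SO.
Variable Sg : signature.
Variable M : structure Sg.

Lemma tev_agree (v v' : nat -> dom M) (t : term Sg) :
  (forall x, tfv t x -> v x = v' x) -> tev v t = tev v' t.
Proof.
  induction t as [y|f a IH]; simpl; intros H.
  - apply H. reflexivity.
  - f_equal. apply functional_extensionality. intro j. apply IH.
    intros x Hx. apply H. exists j. auto.
Qed.

Lemma so_agree (p : soform Sg) : forall (v v' : nat -> dom M) (V V' : soval M),
  (forall x, sofv p x -> v x = v' x) ->
  (forall i k l, sofv2 p i k -> length l = k -> (V i k l <-> V' i k l)) ->
  (so_holds M v V p <-> so_holds M v' V' p).
Proof.
  induction p; simpl; intros v v' V V' Hv HV.
  - rewrite (tev_agree v v' t), (tev_agree v v' t0); [tauto| |]; intros; apply Hv; auto.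
  - replace (fun j => tev v (t j)) with (fun j => tev v' (t j)). tauto.
    apply functional_extensionality. intro j. symmetry. apply tev_agree.
    intros; apply Hv; eauto.
  - replace (map (tev v) l) with (map (tev v') l).
    + apply HV; auto. rewrite length_map. auto.
    + apply map_ext_in. intros t Ht. symmetry. apply tev_agree. intros; apply Hv; eauto.
  - rewrite (IHp v v' V V'); tauto.
  - rewrite (IHp1 v v' V V'), (IHp2 v v' V V'); auto; tauto.
  - rewrite (IHp1 v v' V V'), (IHp2 v v' V V'); auto; tauto.
  - assert (E : forall a, so_holds M (updv v n a) V p <-> so_holds M (updv v' n a) V' p).
    { intro a. apply IHp; auto. intros x Hx. unfold updv. destruct (Nat.eqb_spec x n); auto. }
    firstorder.
  - assert (E : forall a, so_holds M (updv v n a) V p <-> so_holds M (updv v' n a) V' p).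
    { intro a. apply IHp; auto. intros x Hx. unfold updv. destruct (Nat.eqb_spec x n); auto. }
    firstorder.
  - assert (E : forall R, so_holds M v (updV V n n0 R) p <-> so_holds M v' (updV V' n n0 R) p).
    { intro R. apply IHp; auto. intros i k l Hik Hl. unfold updV.
      destruct (Nat.eqb_spec i n); destruct (Nat.eqb_spec k n0); subst; simpl; try tauto;
      apply HV; auto; split; auto; intros E; inversion E; congruence. }
    firstorder.
  - assert (E : forall R, so_holds M v (updV V n n0 R) p <-> so_holds M v' (updV V' n n0 R) p).
    { intro R. apply IHp; auto. intros i k l Hik Hl. unfold updV.
      destruct (Nat.eqb_spec i n); destruct (Nat.eqb_spec k n0); subst; simpl; try tauto;
      apply HV; auto; split; auto; intros E; inversion E; congruence. }
    firstorder.
Qed.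

Fixpoint strip (p : soform Sg) : soform Sg :=
  match p with SAll2 _ _ q => strip q | q => q end.

Lemma strip_sem (p : soform Sg) :
  (forall v V, so_holds M v V p) <-> (forall v V, so_holds M v V (strip p)).
Proof.
  induction p; simpl; try tauto.
  rewrite <- IHp. split.
  - intros H v V. specialize (H v V (V n n0)).
    replace (updV V n n0 (V n n0)) with V in H; auto.
    apply functional_extensionality; intro i; apply functional_extensionality; intro k.
    unfold updV. destruct (Nat.eqb_spec i n); destruct (Nat.eqb_spec k n0); subst; auto.
  - intros H v V R. apply H.
Qed.

Lemma strip_fo (p : soform Sg) : is_pi11 p -> is_fo (strip p).
Proof. induction p; simpl; auto. Qed.

Lemma strip_fv (p : soform Sg) x : sofv (strip p) x -> sofv p x.
Proof. induction p; simpl; auto. Qed.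

End SO.

End P2.
Import P2.

Module P3.

Section Trans.
Variable Sg : signature.
Variable N K : nat.
Variable occ : list (nat * nat).

Definition uv := N.
Definition cv := S N.
Definition zv (j l : nat) := N + 2 + j * (K + 1) + l.
Definition wv (j : nat) := zv j K.

Fixpoint idx (p : nat * nat) (l : list (nat * nat)) : nat :=
  match l with
  | [] => 0
  | q :: qs => if (fst q =? fst p) && (snd q =? snd p) then 0 else S (idx p qs)
  end.

Definition ar (j : nat) := snd (nth j occ (0, 0)).

Fixpoint eqs (j l : nat) (args : list (term Sg)) : idform Sg :=
  match args with
  | [] => itop Sg
  | t :: ts => IAnd (IAtom (AEq (tvar (zv j l)) t)) (eqs j (S l) ts)
  end.

Definition wc j : atom Sg := AEq (tvar (wv j)) (tvar cv).
Definition ineg (a : atom Sg) : idform Sg := IImp (IAtom a) IBot.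
Definition lit (pol : bool) (a : atom Sg) : idform Sg := if pol then IAtom a else ineg a.
Definition uc : atom Sg := AEq (tvar uv) (tvar cv).

Definition Disj (sc : list nat) (A B A' B' : idform Sg) : idform Sg :=
  IOr (IOr A B)
      (IEx uv (IAnd (Dep Sg (remove Nat.eq_dec uv sc) uv)
                    (IAnd (IImp (IAtom uc) A') (IImp (ineg uc) B')))).

Fixpoint tr (m : nat -> bool) (sc : list nat) (pol : bool) (p : soform Sg) : idform Sg :=
  match p with
  | SEq t1 t2 => lit pol (AEq t1 t2)
  | SRel r a => lit pol (ARel r a)
  | SVar i args =>
      let j := idx (i, length args) occ in
      if m j then
        (if pol then IImp (eqs j 0 args) (ineg (wc j))
         else IImp (eqs j 0 args) (IAtom (wc j)))
      else (if pol then itop Sg else IBot)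
  | SNeg q => tr m sc (negb pol) q
  | SAnd q r =>
      if pol then IAnd (tr m sc true q) (tr m sc true r)
      else Disj sc (tr m sc false q) (tr m sc false r)
                   (tr m (uv :: sc) false q) (tr m (uv :: sc) false r)
  | SOr q r =>
      if pol then Disj sc (tr m sc true q) (tr m sc true r)
                   (tr m (uv :: sc) true q) (tr m (uv :: sc) true r)
      else IAnd (tr m sc false q) (tr m sc false r)
  | SAll x q =>
      if pol then IAll x (tr m (x :: sc) true q)
      else IEx x (IAnd (Dep Sg (remove Nat.eq_dec x sc) x) (tr m (x :: sc) false q))
  | SEx x q =>
      if pol then IEx x (IAnd (Dep Sg (remove Nat.eq_dec x sc) x) (tr m (x :: sc) true q))
      else IAll x (tr m (x :: sc) false q)
  | SAll2 _ _ _ | SEx2 _ _ _ => itop Sg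
  end.

End Trans.

End P3.
Import P3.

Module P4.

Section Sem.
Variable Sg : signature.
Variable M : structure Sg.
Variable N K : nat.
Variable occ : list (nat * nat).
Variable d0 : dom M.
Variable G : team M.
Variable c0 : dom M.

Definition valN (s : assignment M) : nat -> dom M :=
  fun y => if y <? N then match s y with Some d => d | None => d0 end else d0.

Lemma teval_valN (s : assignment M) (t : term Sg) : forall d,
  (forall y, tfv t y -> y < N /\ s y <> None) -> (teval s t d <-> d = tev (valN s) t).
Proof.
  induction t as [y|f a IH]; simpl; intros d H.
  - destruct (H y eq_refl) as [Hy Hs]. unfold valN.
    destruct (Nat.ltb_spec y N); [|lia]. destruct (s y); [|congruence].
    split; intro E; congruence.
  - split.
    + intros [ds [Hds ->]]. f_equal. apply functional_extensionality. intro j.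
      apply (IH j); auto. intros y Hy. apply H. exists j. auto.
    + intros ->. exists (fun j => tev (valN s) (a j)). split; auto.
      intro j. apply (IH j); auto. intros y Hy. apply H. exists j. auto.
Qed.

Lemma valN_upd s y a : y < N -> valN (upd s y a) = updv (valN s) y a.
Proof.
  intro Hy. apply functional_extensionality. intro x. unfold valN, upd, updv.
  destruct (Nat.eqb_spec x y); subst; auto.
  destruct (Nat.ltb_spec y N); [auto|lia].
Qed.

Lemma valN_upd_hi s y a : N <= y -> valN (upd s y a) = valN s.
Proof.
  intro Hy. apply functional_extensionality. intro x. unfold valN, upd.
  destruct (Nat.eqb_spec x y); subst; auto.
  destruct (Nat.ltb_spec y N); [lia|auto].
Qed.

Lemma valN_ext s s' : (forall x, x < N -> s x = s' x) -> valN s = valN s'.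
Proof.
  intro H. apply functional_extensionality. intro x. unfold valN.
  destruct (Nat.ltb_spec x N); auto. rewrite H; auto.
Qed.

Definition inv (X : team M) (sc : list nat) : Prop :=
  (forall x, In x sc -> x < S N) /\
  (forall s, X s -> forall x, x < S N -> (s x <> None <-> In x sc)) /\
  (forall s, X s -> exists g, G g /\ forall x, S N <= x -> s x = g x) /\
  (forall s g, X s -> G g -> exists s', X s' /\ (forall x, x < S N -> s' x = s x)
                                  /\ (forall x, S N <= x -> s' x = g x)).

Lemma inv_dup X sc y : inv X sc -> y < S N -> inv (team_dup X y) (y :: sc).
Proof.
  intros [H0 [H1 [H2 H3]]] Hy. split; [|split; [|split]].
  - intros x [<-|Hx]; auto.
  - intros s' [s [a [Hs ->]]] x Hx. unfold upd. simpl.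
    destruct (Nat.eqb_spec x y); subst.
    + split; auto. congruence.
    + rewrite H1; auto. split; [auto|intros [E|E]; [congruence|auto]].
  - intros s' [s [a [Hs ->]]]. destruct (H2 s Hs) as [g [Hg Eg]]. exists g. split; auto.
    intros x Hx. unfold upd. destruct (Nat.eqb_spec x y); [lia|auto].
  - intros s' g [s [a [Hs ->]]] Hg. destruct (H3 s g Hs Hg) as [t [Ht [E1 E2]]].
    exists (upd t y a). split; [exists t, a; auto|split].
    + intros x Hx. unfold upd. destruct (Nat.eqb_spec x y); auto.
    + intros x Hx. unfold upd. destruct (Nat.eqb_spec x y); [lia|auto].
Qed.

Definition agree_ex (s s' : assignment M) (y : nat) :=
  forall x, x < S N -> x <> y -> s x = s' x.

Lemma inv_supp X sc y F : inv X sc -> y < S N ->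
  (forall s s', X s -> X s' -> agree_ex s s' y -> F s = F s') ->
  inv (team_supp X F y) (y :: sc).
Proof.
  intros [H0 [H1 [H2 H3]]] Hy HF. split; [|split; [|split]].
  - intros x [<-|Hx]; auto.
  - intros s' [s [Hs ->]] x Hx. unfold upd. simpl.
    destruct (Nat.eqb_spec x y); subst.
    + split; auto. congruence.
    + rewrite H1; auto. split; [auto|intros [E|E]; [congruence|auto]].
  - intros s' [s [Hs ->]]. destruct (H2 s Hs) as [g [Hg Eg]]. exists g. split; auto.
    intros x Hx. unfold upd. destruct (Nat.eqb_spec x y); [lia|auto].
  - intros s' g [s [Hs ->]] Hg. destruct (H3 s g Hs Hg) as [t [Ht [E1 E2]]].
    exists (upd t y (F t)). split; [exists t; auto|split].
    + intros x Hx. unfold upd. destruct (Nat.eqb_spec x y); auto.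
      subst. f_equal. apply HF; auto. intros z Hz Hzy. apply E1; auto.
    + intros x Hx. unfold upd. destruct (Nat.eqb_spec x y); [lia|auto].
Qed.

Lemma inv_restrict X sc P : inv X sc ->
  (forall s s', X s -> X s' -> (forall x, x < S N -> s' x = s x) -> P s -> P s') ->
  inv (fun s => X s /\ P s) sc.
Proof.
  intros [H0 [H1 [H2 H3]]] HP. split; [|split; [|split]]; auto.
  - intros s [Hs _]. auto.
  - intros s [Hs _]. auto.
  - intros s g [Hs Ps] Hg. destruct (H3 s g Hs Hg) as [t [Ht [E1 E2]]].
    exists t. split; [split; auto|auto]. eapply HP; eauto.
Qed.

Lemma dep_sound X sc y F : inv X sc -> y < S N ->
  id_sat M (team_supp X F y) (Dep Sg (remove Nat.eq_dec y sc) y) ->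
  (forall s s', X s -> X s' -> agree_ex s s' y -> F s = F s').
Proof.
  intros [H0 [H1 [H2 H3]]] Hy HD s s' Hs Hs' Hag.
  rewrite Dep_sem in HD.
  specialize (HD (upd s y (F s)) (upd s' y (F s'))).
  assert (W : wagree Sg M (upd s y (F s)) (upd s' y (F s')) y).
  { apply HD; [exists s; auto | exists s'; auto |].
    intros x Hx. apply in_remove in Hx. destruct Hx as [Hx Hxy].
    intros d d' E E'. unfold upd in E, E'. destruct (Nat.eqb_spec x y); [congruence|].
    rewrite Hag in E; auto. congruence. }
  apply (W (F s) (F s')); unfold upd; rewrite Nat.eqb_refl; auto.
Qed.

Lemma dep_complete X sc y F : inv X sc -> y < S N ->
  (forall s s', X s -> X s' -> agree_ex s s' y -> F s = F s') ->
  id_sat M (team_supp X F y) (Dep Sg (remove Nat.eq_dec y sc) y).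
Proof.
  intros [H0 [H1 [H2 H3]]] Hy HF. apply Dep_sem.
  intros s1 s1' [s [Hs ->]] [s' [Hs' ->]] Hag d d' E E'.
  unfold upd in E, E'. rewrite Nat.eqb_refl in E, E'.
  assert (F s = F s'); [|congruence].
  apply HF; auto. intros x Hx Hxy.
  destruct (in_dec Nat.eq_dec x sc) as [Hin|Hnin].
  - assert (Hr : In x (remove Nat.eq_dec y sc)) by (apply in_in_remove; auto).
    specialize (Hag x Hr). unfold wagree, upd in Hag.
    destruct (Nat.eqb_spec x y); [congruence|].
    destruct (s x) eqn:Ex; [|exfalso; apply (proj2 (H1 s Hs x Hx) Hin); auto].
    destruct (s' x) eqn:Ex'; [|exfalso; apply (proj2 (H1 s' Hs' x Hx) Hin); auto].
    f_equal. apply Hag; auto.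
  - destruct (s x) eqn:Ex; [exfalso; apply Hnin; apply (H1 s Hs x Hx); congruence|].
    destruct (s' x) eqn:Ex'; [exfalso; apply Hnin; apply (H1 s' Hs' x Hx); congruence|].
    auto.
Qed.

End Sem.

End P4.
Import P4.

Module P5.

Section FO.
Variable Sg : signature.
Variable M : structure Sg.
Variable N K : nat.
Variable occ : list (nat * nat).
Variable d0 : dom M.
Variable G : team M.
Variable c0 : dom M.
Variable m : nat -> bool.

Notation inv := (inv Sg M N G).
Notation valN := (valN Sg M N d0).
Notation zv := (zv N K).
Notation wv := (wv N K).
Notation cv := (cv N).
Notation uv := (uv N).

Fixpoint zm (j l : nat) (ds : list (dom M)) (g : assignment M) : Prop :=
  match ds with
  | [] => True
  | d :: ds => g (zv j l) = Some d /\ zm j (S l) ds g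
  end.

Definition Wc (j : nat) (g : assignment M) := exists d, g (wv j) = Some d /\ g cv = Some d.

Definition Vdec : soval M := fun i k ds =>
  let j := idx (i, k) occ in
  if m j then forall g, G g -> zm j 0 ds g -> ~ Wc j g else True.

Hypothesis Gc : forall g, G g -> g cv = Some c0.
Hypothesis Gfun : forall j, m j = true -> forall g g', G g -> G g' ->
  (forall l, l < ar occ j -> g (zv j l) = g' (zv j l)) -> g (wv j) = g' (wv j).
Hypothesis Gfull : forall j, m j = true -> forall ds, length ds = ar occ j ->
  exists g, G g /\ zm j 0 ds g.

Definition hp (pol : bool) (P : Prop) : Prop := if pol then P else ~ P.

Definition tb (t : term Sg) := forall y, tfv t y -> y < N.
Fixpoint vb (p : soform Sg) : Prop :=
  match p with
  | SEq t1 t2 => tb t1 /\ tb t2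
  | SRel r a => forall j, tb (a j)
  | SVar i args => (forall t, In t args -> tb t) /\ In (i, length args) occ
  | SNeg q => vb q
  | SAnd q r | SOr q r => vb q /\ vb r
  | SAll x q | SEx x q => x < N /\ vb q
  | SAll2 _ _ _ | SEx2 _ _ _ => False
  end.

Lemma idx_nth p l : In p l -> nth (idx p l) l (0, 0) = p.
Proof.
  induction l as [|q qs IH]; simpl; [tauto|].
  intros [<-|H].
  - rewrite !Nat.eqb_refl. reflexivity.
  - destruct ((fst q =? fst p) && (snd q =? snd p)) eqn:E; auto.
    apply andb_true_iff in E. destruct E as [E1 E2].
    apply Nat.eqb_eq in E1, E2. destruct p, q; simpl in *; subst; auto.
Qed.

Lemma zm_agree j l ds s g : (forall x, S N <= x -> s x = g x) -> (zm j l ds s <-> zm j l ds g).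
Proof.
  intro H. revert l. induction ds; simpl; intro l; [tauto|].
  rewrite H by (unfold P3.zv; lia). rewrite IHds. tauto.
Qed.

Lemma zm_nth j l ds g : zm j l ds g -> forall i, i < length ds -> g (zv j (l + i)) = Some (nth i ds d0).
Proof.
  revert l. induction ds; simpl; intros l H i Hi; [lia|].
  destruct H as [H1 H2]. destruct i.
  - rewrite Nat.add_0_r. auto.
  - replace (l + S i) with (S l + i) by lia. apply IHds; auto. lia.
Qed.

Lemma Wc_agree j s g : (forall x, S N <= x -> s x = g x) -> (Wc j s <-> Wc j g).
Proof.
  intro H. unfold Wc. rewrite !H by (unfold P3.wv, P3.zv, P3.cv; lia). tauto.
Qed.

Fixpoint eqsA (j l : nat) (args : list (term Sg)) (s : assignment M) : Prop :=
  match args with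
  | [] => True
  | t :: ts => atom_holds s (AEq (tvar (zv j l)) t) /\ eqsA j (S l) ts s
  end.

Lemma eqs_flat j l args : flat Sg M (eqs Sg N K j l args) (eqsA j l args).
Proof.
  revert l. induction args; simpl; intro l.
  - intro X. split; auto. intros. simpl; auto.
  - intro X. rewrite (flat_and Sg M _ _ _ _ (flat_atom Sg M _) (IHargs (S l)) X). tauto.
Qed.

Lemma eqsA_zm j l args s : (forall t, In t args -> forall y, tfv t y -> y < N /\ s y <> None) ->
  (eqsA j l args s <-> zm j l (map (tev (valN s)) args) s).
Proof.
  revert l. induction args; simpl; intros l H; [tauto|].
  rewrite IHargs by (intros t Ht; apply H; auto). split.
  - intros [[d [E1 E2]] R]. split; auto. simpl in E1.
    apply (teval_valN Sg M N d0) in E2; [congruence|]. intros y Hy; apply (H a); auto.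
  - intros [E R]. split; auto. exists (tev (valN s) a). split; auto.
    apply (teval_valN Sg M N d0); auto. intros y Hy. apply (H a); auto.
Qed.

Lemma lit_flat pol (a : atom Sg) : flat Sg M (lit Sg pol a) (fun s => hp pol (atom_holds s a)).
Proof.
  destruct pol; simpl.
  - apply flat_atom.
  - apply (flat_imp Sg M _ _ _ _ (flat_atom Sg M a) (flat_bot Sg M)).
Qed.

Lemma flat_sat p P X : flat Sg M p P -> (id_sat M X p <-> forall s, X s -> P s).
Proof. intro H. apply H. Qed.


Lemma sat_ex X x p : id_sat M X (IEx x p) <-> exists F, id_sat M (team_supp X F x) p.
Proof. reflexivity. Qed.
Lemma sat_and X p q : id_sat M X (IAnd p q) <-> id_sat M X p /\ id_sat M X q.
Proof. reflexivity. Qed.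
Lemma sat_or X p q : id_sat M X (IOr p q) <-> id_sat M X p \/ id_sat M X q.
Proof. reflexivity. Qed.
Lemma sat_all X x p : id_sat M X (IAll x p) <-> id_sat M (team_dup X x) p.
Proof. reflexivity. Qed.

Lemma inv_c X sc : inv X sc -> forall s, X s -> s cv = Some c0.
Proof.
  intros [_ [_ [H2 _]]] s Hs. destruct (H2 s Hs) as [g [Hg E]].
  rewrite E by (unfold P3.cv; lia). auto.
Qed.

Lemma all_case x sc X phi (Q : (nat -> dom M) -> Prop) :
  x < N -> inv X sc ->
  (forall Y, inv Y (x :: sc) -> (id_sat M Y phi <-> forall s, Y s -> Q (valN s))) ->
  (id_sat M X (IAll x phi) <-> forall s, X s -> forall a, Q (updv (valN s) x a)).
Proof.
  intros Hx HX IH. rewrite sat_all, IH by (apply inv_dup; auto; lia). split.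
  - intros H s Hs a. rewrite <- (valN_upd Sg M N d0) by auto. apply H. exists s, a. auto.
  - intros H s' [s [a [Hs ->]]]. rewrite (valN_upd Sg M N d0) by auto. auto.
Qed.

Lemma ex_case x sc X phi (Q : (nat -> dom M) -> Prop) :
  x < N -> inv X sc ->
  (forall Y, inv Y (x :: sc) -> (id_sat M Y phi <-> forall s, Y s -> Q (valN s))) ->
  (id_sat M X (IEx x (IAnd (Dep Sg (remove Nat.eq_dec x sc) x) phi)) <->
     forall s, X s -> exists a, Q (updv (valN s) x a)).
Proof.
  intros Hx HX IH. rewrite sat_ex. split.
  - intros [F [HD Hp]].
    assert (HF := dep_sound Sg M N G X sc x F HX ltac:(lia) HD).
    rewrite IH in Hp by (apply inv_supp; auto; lia).
    intros s Hs. exists (F s). rewrite <- (valN_upd Sg M N d0) by auto. apply Hp. exists s. auto.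
  - intros H.
    set (F := fun s => epsilon (inhabits d0) (fun a => Q (updv (valN s) x a))).
    assert (HF : forall s s', X s -> X s' -> agree_ex Sg M N s s' x -> F s = F s').
    { intros s s' Hs Hs' Hag. unfold F.
      replace (updv (valN s) x) with (updv (valN s') x); auto.
      apply functional_extensionality; intro a. apply functional_extensionality; intro y.
      unfold updv, P4.valN. destruct (Nat.eqb_spec y x); auto.
      destruct (Nat.ltb_spec y N); auto. rewrite Hag; auto. }
    exists F. split.
    + apply (dep_complete Sg M N G); auto.
    + rewrite IH by (apply inv_supp; auto; lia).
      intros s' [s [Hs ->]]. rewrite (valN_upd Sg M N d0) by auto.
      unfold F. apply epsilon_spec. auto.
Qed.

Lemma uc_agree X sc s s' : inv X sc -> X s -> X s' -> (forall x, x < S N -> s' x = s x) ->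
  (atom_holds s (uc Sg N) <-> atom_holds s' (uc Sg N)).
Proof.
  intros HX Hs Hs' E. unfold uc. simpl.
  rewrite (E uv) by (unfold P3.uv; lia).
  rewrite (inv_c X sc HX s Hs), (inv_c X sc HX s' Hs'). tauto.
Qed.

Lemma disj_case sc X fA fB fA' fB' (QA QB : (nat -> dom M) -> Prop) :
  inv X sc ->
  (forall Y, inv Y sc -> (id_sat M Y fA <-> forall s, Y s -> QA (valN s))) ->
  (forall Y, inv Y sc -> (id_sat M Y fB <-> forall s, Y s -> QB (valN s))) ->
  (forall Y, inv Y (uv :: sc) -> (id_sat M Y fA' <-> forall s, Y s -> QA (valN s))) ->
  (forall Y, inv Y (uv :: sc) -> (id_sat M Y fB' <-> forall s, Y s -> QB (valN s))) ->
  (id_sat M X (Disj Sg N sc fA fB fA' fB') <-> forall s, X s -> QA (valN s) \/ QB (valN s)).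
Proof.
  intros HX IA IB IA' IB'. unfold Disj. rewrite !sat_or, sat_ex. setoid_rewrite sat_and. setoid_rewrite sat_and.
  rewrite IA, IB by auto.
  assert (Hfl : flat Sg M (ineg Sg (uc Sg N)) (fun s => atom_holds s (uc Sg N) -> False))
    by apply (flat_imp Sg M _ _ _ _ (flat_atom Sg M _) (flat_bot Sg M)).
  assert (Hinv : forall F, (forall s s', X s -> X s' -> agree_ex Sg M N s s' uv -> F s = F s') ->
     inv (team_supp X F uv) (uv :: sc)) by (intros; apply inv_supp; auto; unfold P3.uv; lia).
  assert (HR : forall F P, (forall s s', X s -> X s' -> agree_ex Sg M N s s' uv -> F s = F s') ->
     (forall s s', team_supp X F uv s -> team_supp X F uv s' -> (forall x, x < S N -> s' x = s x) -> P s -> P s') ->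
     inv (fun s => team_supp X F uv s /\ P s) (uv :: sc)).
  { intros F P HF HP. apply inv_restrict; auto. }
  split.
  - intros [[H|H]|[F [HD [HA HB]]]].
    + intros s Hs. left. auto.
    + intros s Hs. right. auto.
    + assert (HF := dep_sound Sg M N G X sc uv F HX ltac:(unfold P3.uv; lia) HD).
      rewrite (imp_restrict Sg M _ _ _ _ (flat_atom Sg M _)) in HA.
      rewrite (imp_restrict Sg M _ _ _ _ Hfl) in HB.
      rewrite IA' in HA.
      2:{ apply HR; auto. intros s s' Hs Hs' E. apply (uc_agree _ _ s s' (Hinv F HF)); auto. }
      rewrite IB' in HB.
      2:{ apply HR; auto. intros s s' Hs Hs' E H1 H2. apply H1.
          apply (uc_agree _ _ s s' (Hinv F HF)); auto. }
      intros s Hs. rewrite <- (valN_upd_hi Sg M N d0 s uv (F s)) by (unfold P3.uv; lia).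
      destruct (classic (atom_holds (upd s uv (F s)) (uc Sg N))) as [Hu|Hu].
      * left. apply HA. split; auto. exists s. auto.
      * right. apply HB. split; auto. exists s. auto.
  - intros H. destruct (classic (exists d1, d1 <> c0)) as [[d1 Hd1]|Hsing].
    + right.
      set (F := fun s => if excluded_middle_informative (QA (valN s)) then c0 else d1).
      assert (HF : forall s s', X s -> X s' -> agree_ex Sg M N s s' uv -> F s = F s').
      { intros s s' Hs Hs' Hag. unfold F.
        rewrite (valN_ext Sg M N d0 s s'); auto.
        intros x Hx. apply Hag; unfold P3.uv; lia. }
      exists F. split; [apply (dep_complete Sg M N G); auto; unfold P3.uv; lia|].
      rewrite (imp_restrict Sg M _ _ _ _ (flat_atom Sg M _)).
      rewrite (imp_restrict Sg M _ _ _ _ Hfl).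
      rewrite IA', IB'.
      * split.
        -- intros s' [[s [Hs ->]] Hu]. rewrite (valN_upd_hi Sg M N d0) by (unfold P3.uv; lia).
           unfold uc in Hu. simpl in Hu. destruct Hu as [d [E1 E2]].
           unfold upd in E1, E2. rewrite Nat.eqb_refl in E1.
           replace (P3.cv N =? P3.uv N) with false in E2 by (symmetry; apply Nat.eqb_neq; unfold P3.cv, P3.uv; lia).
           rewrite (inv_c X sc HX s Hs) in E2.
           unfold F in E1. destruct (excluded_middle_informative (QA (valN s))); auto. congruence.
        -- intros s' [[s [Hs ->]] Hu]. rewrite (valN_upd_hi Sg M N d0) by (unfold P3.uv; lia).
           destruct (H s Hs) as [HA|HB]; auto. exfalso. apply Hu.
           unfold uc. simpl. exists c0. unfold upd. rewrite Nat.eqb_refl.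
           replace (P3.cv N =? P3.uv N) with false by (symmetry; apply Nat.eqb_neq; unfold P3.cv, P3.uv; lia).
           rewrite (inv_c X sc HX s Hs). unfold F.
           destruct (excluded_middle_informative (QA (valN s))); tauto.
      * apply HR; auto. intros s s' Hs Hs' E H1 H2. apply H1.
        apply (uc_agree _ _ s s' (Hinv F HF)); auto.
      * apply HR; auto. intros s s' Hs Hs' E. apply (uc_agree _ _ s s' (Hinv F HF)); auto.
    + left.
      assert (Hall : forall s s', valN s = valN s').
      { intros s s'. apply functional_extensionality. intro y.
        transitivity c0; [|symmetry]; apply NNPP; intro E; apply Hsing; eauto. }
      destruct (classic (exists s, X s /\ QA (valN s))) as [[s0 [Hs0 HQ]]|Hno].
      * left. intros s Hs. rewrite (Hall s s0). auto.
      * right. intros s Hs. destruct (H s Hs); auto. exfalso. apply Hno. eauto.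
Qed.

Lemma forall_iff (X : team M) (A B : assignment M -> Prop) :
  (forall s, X s -> (A s <-> B s)) -> ((forall s, X s -> A s) <-> (forall s, X s -> B s)).
Proof. firstorder. Qed.

Lemma hp_iff pol P Q : (P <-> Q) -> (hp pol P <-> hp pol Q).
Proof. destruct pol; simpl; tauto. Qed.

Lemma inv_def X sc s y : inv X sc -> X s -> In y sc -> y < N -> s y <> None.
Proof. intros [_ [H1 _]] Hs Hy Hn. apply (H1 s Hs y); auto. Qed.

Lemma fo_main (p : soform Sg) : forall pol sc X,
  vb p -> (forall x, sofv p x -> In x sc) -> inv X sc ->
  (id_sat M X (tr Sg N K occ m sc pol p) <-> forall s, X s -> hp pol (so_holds M (valN s) Vdec p)).
Proof.
  induction p as [t1 t2|r a|i args|q IH|q IHq r IHr|q IHq r IHr|x q IH|x q IH|i k q IH|i k q IH];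
    intros pol sc X Hvb Hsc HX; simpl tr.
  - rewrite (flat_sat _ _ _ (lit_flat pol _)). apply forall_iff. intros s Hs. apply hp_iff.
    simpl. destruct Hvb as [T1 T2].
    assert (D : forall t, tb t -> (forall y, tfv t y -> sofv (SEq t1 t2) y) -> forall d,
              teval s t d <-> d = tev (valN s) t).
    { intros t Tt Ht d. apply teval_valN. intros y Hy. split; auto.
      apply (inv_def X sc); auto. }
    split.
    + intros [d [E1 E2]]. rewrite D in E1, E2 by (simpl; auto). congruence.
    + intros E. exists (tev (valN s) t1). rewrite !D by (simpl; auto). auto.
  - rewrite (flat_sat _ _ _ (lit_flat pol _)). apply forall_iff. intros s Hs. apply hp_iff.
    simpl.
    assert (D : forall j d, teval s (a j) d <-> d = tev (valN s) (a j)).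
    { intros j d. apply teval_valN. intros y Hy. split; [exact (Hvb j y Hy)|].
      apply (inv_def X sc); auto. apply Hsc. simpl. eauto. exact (Hvb j y Hy). }
    split.
    + intros [ds [E1 E2]]. replace (fun j => tev (valN s) (a j)) with ds; auto.
      apply functional_extensionality. intro j. apply D. auto.
    + intros E. exists (fun j => tev (valN s) (a j)). split; auto. intro j. apply D. auto.
  - destruct Hvb as [Targs Hin].
    set (j := idx (i, length args) occ).
    assert (Har : ar occ j = length args).
    { unfold ar, j. rewrite idx_nth; auto. }
    assert (DE : forall s, X s -> (eqsA j 0 args s <-> zm j 0 (map (tev (valN s)) args) s)).
    { intros s Hs. apply eqsA_zm. intros t Ht y Hy. split; [exact (Targs t Ht y Hy)|].
      apply (inv_def X sc); auto. apply Hsc. simpl. eauto. exact (Targs t Ht y Hy). }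
    simpl so_holds. unfold Vdec. fold j.
    destruct (m j) eqn:Em.
    + destruct HX as [H0 [H1 [H2 H3]]].
      destruct pol.
      * rewrite (flat_sat _ _ _ (flat_imp Sg M _ _ _ _ (eqs_flat j 0 args)
                   (flat_imp Sg M _ _ _ _ (flat_atom Sg M (wc Sg N K j)) (flat_bot Sg M)))).
        simpl hp. split.
        -- intros H s Hs g Hg Hz Hw.
           destruct (H3 s g Hs Hg) as [s' [Hs' [E1 E2]]].
           assert (Ev : valN s' = valN s) by (apply valN_ext; intros; apply E1; lia).
           apply (H s' Hs').
           ++ apply DE; auto. rewrite Ev. apply (zm_agree j 0 _ s' g E2). auto.
           ++ apply (Wc_agree j s' g E2). auto.
        -- intros H s Hs Hz Hw. destruct (H2 s Hs) as [g [Hg E]].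
           apply (H s Hs g Hg).
           ++ apply (zm_agree j 0 _ s g E). apply DE; auto.
           ++ apply (Wc_agree j s g E). auto.
      * rewrite (flat_sat _ _ _ (flat_imp Sg M _ _ _ _ (eqs_flat j 0 args) (flat_atom Sg M (wc Sg N K j)))).
        simpl hp. split.
        -- intros H s Hs HV.
           destruct (Gfull j Em (map (tev (valN s)) args)) as [g [Hg Hz]].
           { rewrite length_map. auto. }
           destruct (H3 s g Hs Hg) as [s' [Hs' [E1 E2]]].
           assert (Ev : valN s' = valN s) by (apply valN_ext; intros; apply E1; lia).
           apply (HV g Hg Hz). apply (Wc_agree j s' g E2). apply H; auto.
           apply DE; auto. rewrite Ev. apply (zm_agree j 0 _ s' g E2). auto.
        -- intros H s Hs Hz. apply DE in Hz; auto.
           destruct (H2 s Hs) as [gs [Hgs Es]].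
           specialize (H s Hs). apply not_all_ex_not in H. destruct H as [g H].
           apply imply_to_and in H. destruct H as [Hg H].
           apply imply_to_and in H. destruct H as [Hzg H]. apply NNPP in H.
           change (Wc j s). apply (Wc_agree j s gs Es).
           apply (zm_agree j 0 _ s gs Es) in Hz.
           destruct H as [d [Ew Ec]]. exists d. split.
           ++ rewrite <- Ew. symmetry. apply (Gfun j Em g gs Hg Hgs).
              intros l Hl. rewrite Har in Hl.
              pose proof (zm_nth j 0 _ g Hzg l) as Z1; pose proof (zm_nth j 0 _ gs Hz l) as Z2; simpl in Z1, Z2; rewrite length_map in Z1, Z2; rewrite Z1, Z2; auto.
           ++ rewrite (Gc gs Hgs). rewrite (Gc g Hg) in Ec. auto.
    + destruct pol; simpl.
      * split; auto.
      * split; [intros H s Hs _; apply (H s Hs)|intros H s Hs; apply (H s Hs); auto].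
  - rewrite IH; auto. apply forall_iff. intros s Hs. destruct pol; simpl; tauto.
  - destruct Hvb as [Vq Vr].
    assert (Sq : forall x, sofv q x -> In x sc) by (intros; apply Hsc; simpl; auto).
    assert (Sr : forall x, sofv r x -> In x sc) by (intros; apply Hsc; simpl; auto).
    destruct pol.
    + rewrite sat_and, IHq, IHr by auto. simpl. firstorder.
    + rewrite (disj_case sc X _ _ _ _ (fun v => ~ so_holds M v Vdec q) (fun v => ~ so_holds M v Vdec r)).
      2-6: auto; try (intros Y HY; first [apply (IHq false) | apply (IHq true) | apply (IHr false) | apply (IHr true)]; simpl; auto).
      apply forall_iff. intros s Hs. simpl. split; [tauto|intros H; apply not_and_or; auto].
  - destruct Hvb as [Vq Vr].
    assert (Sq : forall x, sofv q x -> In x sc) by (intros; apply Hsc; simpl; auto).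
    assert (Sr : forall x, sofv r x -> In x sc) by (intros; apply Hsc; simpl; auto).
    destruct pol.
    + rewrite (disj_case sc X _ _ _ _ (fun v => so_holds M v Vdec q) (fun v => so_holds M v Vdec r)).
      2-6: auto; try (intros Y HY; first [apply (IHq false) | apply (IHq true) | apply (IHr false) | apply (IHr true)]; simpl; auto).
      simpl. tauto.
    + rewrite sat_and, IHq, IHr by auto. simpl. firstorder.
  - destruct Hvb as [Hx Vq].
    assert (Sq : forall y, sofv q y -> In y (x :: sc)).
    { intros y Hy. destruct (Nat.eq_dec y x); [left; auto|right; apply Hsc; simpl; auto]. }
    destruct pol.
    + rewrite (all_case x sc X _ (fun v => so_holds M v Vdec q)).
      2-4: auto; try (intros Y HY; apply IH; simpl; auto).
      simpl. tauto.
    + rewrite (ex_case x sc X _ (fun v => ~ so_holds M v Vdec q)).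
      2-4: auto; try (intros Y HY; apply IH; simpl; auto).
      apply forall_iff. intros s Hs. simpl. split.
      * intros [a Ha] H. apply Ha. apply H.
      * intros H. apply not_all_ex_not. auto.
  - destruct Hvb as [Hx Vq].
    assert (Sq : forall y, sofv q y -> In y (x :: sc)).
    { intros y Hy. destruct (Nat.eq_dec y x); [left; auto|right; apply Hsc; simpl; auto]. }
    destruct pol.
    + rewrite (ex_case x sc X _ (fun v => so_holds M v Vdec q)).
      2-4: auto; try (intros Y HY; apply IH; simpl; auto).
      simpl. tauto.
    + rewrite (all_case x sc X _ (fun v => ~ so_holds M v Vdec q)).
      2-4: auto; try (intros Y HY; apply IH; simpl; auto).
      apply forall_iff. intros s Hs. simpl. split.
      * intros H [a Ha]. apply (H a). auto.
      * intros H a Ha. apply H. eauto.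
  - destruct Hvb.
  - destruct Hvb.
Qed.

End FO.

End P5.
Import P5.

Module P6.

Section Blocks.
Variable N K : nat.

Lemma blk j j' a b : a <= K -> b <= K -> j * (K + 1) + a = j' * (K + 1) + b -> j = j' /\ a = b.
Proof.
  intros Ha Hb E.
  destruct (Nat.lt_trichotomy j j') as [L|[L|L]].
  - exfalso. assert (S j * (K + 1) <= j' * (K + 1)) by (apply Nat.mul_le_mono_r; lia).
    simpl in H. lia.
  - subst. lia.
  - exfalso. assert (S j' * (K + 1) <= j * (K + 1)) by (apply Nat.mul_le_mono_r; lia).
    simpl in H. lia.
Qed.

Lemma zv_inj j j' a b : a <= K -> b <= K -> zv N K j a = zv N K j' b -> j = j' /\ a = b.
Proof. unfold zv. intros Ha Hb E. apply blk; auto. lia. Qed.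

Lemma zv_ge j a : S N <= zv N K j a.
Proof. unfold zv. lia. Qed.

Lemma zv_cv j a : zv N K j a <> cv N.
Proof. unfold zv, cv. lia. Qed.

End Blocks.

Section Dup.
Variable Sg : signature.
Variable M : structure Sg.

Fixpoint dupL (X : team M) (zs : list nat) : team M :=
  match zs with [] => X | z :: zs => dupL (team_dup X z) zs end.

Definition updL (s : assignment M) (zs : list nat) (g : nat -> dom M) : assignment M :=
  fun x => if existsb (Nat.eqb x) zs then Some (g x) else s x.

Lemma allZ_sat (zs : list nat) : forall (X : team M) (p : idform Sg),
  id_sat M X (fold_right IAll p zs) <-> id_sat M (dupL X zs) p.
Proof.
  induction zs; simpl; intros X p; [tauto|].
  change (id_sat M (team_dup X a) (fold_right IAll p zs) <-> id_sat M (dupL (team_dup X a) zs) p).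
  apply IHzs.
Qed.

Lemma dupL_mem (zs : list nat) : forall (X : team M) s',
  dupL X zs s' <-> exists s g, X s /\ s' = updL s zs g.
Proof.
  induction zs as [|z zs IH]; simpl; intros X s'.
  - split.
    + intros H. destruct (dom_ne _ M) as [d]. exists s', (fun _ => d). split; auto.
    + intros [s [g [Hs ->]]]. replace (updL s [] g) with s; auto; apply functional_extensionality; intro x; reflexivity.
  - rewrite IH. split.
    + intros [s0 [g [[s [a [Hs ->]]] ->]]].
      exists s, (fun x => if existsb (Nat.eqb x) zs then g x else a). split; auto.
      apply functional_extensionality. intro x. unfold updL, upd. simpl.
      destruct (existsb (Nat.eqb x) zs); destruct (Nat.eqb x z); simpl; auto.
    + intros [s [g [Hs ->]]]. exists (upd s z (g z)), g. split; [exists s, (g z); auto|].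
      apply functional_extensionality. intro x. unfold updL, upd. simpl.
      destruct (Nat.eqb_spec x z); subst; simpl;
      destruct (existsb (Nat.eqb _) zs); auto.
Qed.

Lemma updL_in s zs g x : In x zs -> updL s zs g x = Some (g x).
Proof.
  intro H. unfold updL. replace (existsb (Nat.eqb x) zs) with true; auto.
  symmetry. apply existsb_exists. exists x. split; auto. apply Nat.eqb_refl.
Qed.

Lemma updL_out s zs g x : ~ In x zs -> updL s zs g x = s x.
Proof.
  intro H. unfold updL. replace (existsb (Nat.eqb x) zs) with false; auto.
  symmetry. apply not_true_iff_false. intro E. apply existsb_exists in E.
  destruct E as [y [Hy E]]. apply Nat.eqb_eq in E. subst. auto.
Qed.

End Dup.

End P6.
Import P6.

Module P7.

Section Pre.
Variable Sg : signature.
Variable N K : nat.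
Variable occ : list (nat * nat).

Definition zs j := map (zv N K j) (seq 0 (ar occ j)).
Definition setm (m : nat -> bool) j : nat -> bool := fun j' => if j' =? j then true else m j'.

Fixpoint pre (fuel j : nat) (m : nat -> bool) (body : (nat -> bool) -> idform Sg) : idform Sg :=
  match fuel with
  | 0 => body m
  | S f => IOr (pre f (S j) m body)
               (fold_right IAll (IEx (wv N K j) (IAnd (Dep Sg (zs j) (wv N K j))
                                       (pre f (S j) (setm m j) body))) (zs j))
  end.

End Pre.

Section PreSem.
Variable Sg : signature.
Variable M : structure Sg.
Variable N K : nat.
Variable occ : list (nat * nat).
Variable d0 c0 : dom M.
Hypothesis HK : forall j, ar occ j <= K.

Notation zv := (zv N K).
Notation wv := (wv N K).
Notation cv := (cv N).
Notation zs := (zs N K occ).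
Notation zm := (zm Sg M N K).
Notation Wc := (Wc Sg M N K).

Lemma zm_iff j l ds g : zm j l ds g <-> forall i, i < length ds -> g (zv j (l + i)) = Some (nth i ds d0).
Proof.
  revert l. induction ds as [|d ds IH]; simpl; intro l.
  - split; auto. intros _ i Hi. lia.
  - rewrite IH. split.
    + intros [H1 H2] i Hi. destruct i.
      * rewrite Nat.add_0_r. auto.
      * replace (l + S i) with (S l + i) by lia. apply H2. lia.
    + intros H. split.
      * specialize (H 0 ltac:(lia)). rewrite Nat.add_0_r in H. auto.
      * intros i Hi. replace (S l + i) with (l + S i) by lia. apply (H (S i)). lia.
Qed.

Lemma in_zs j x : In x (zs j) <-> exists i, i < ar occ j /\ x = zv j i.
Proof.
  unfold P7.zs. rewrite in_map_iff. split.
  - intros [i [<- Hi]]. apply in_seq in Hi. exists i. split; auto. lia.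
  - intros [i [Hi ->]]. exists i. split; auto. apply in_seq. lia.
Qed.

Lemma wv_notin j : ~ In (wv j) (zs j).
Proof.
  rewrite in_zs. intros [i [Hi E]]. unfold P3.wv in E.
  apply zv_inj in E; auto; try lia. specialize (HK j). lia. specialize (HK j). lia.
Qed.

Lemma other_notin j j' l : j' <> j -> l <= K -> ~ In (zv j' l) (zs j) /\ zv j' l <> wv j.
Proof.
  intros Hj Hl. split.
  - rewrite in_zs. intros [i [Hi E]]. apply zv_inj in E; try lia. specialize (HK j). lia.
  - unfold P3.wv. intro E. apply zv_inj in E; lia.
Qed.

Lemma low_notin j x : x < S N \/ x = cv -> ~ In x (zs j) /\ x <> wv j.
Proof.
  intros Hx. split.
  - rewrite in_zs. intros [i [Hi ->]]. pose proof (zv_ge N K j i). pose proof (zv_cv N K j i). unfold P3.cv in *. lia.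
  - unfold P3.wv. pose proof (zv_ge N K j K). pose proof (zv_cv N K j K). unfold P3.cv in *. lia.
Qed.

Definition Gfun_p (m : nat -> bool) (X : team M) := forall j, m j = true -> forall g g', X g -> X g' ->
  (forall l, l < ar occ j -> g (zv j l) = g' (zv j l)) -> g (wv j) = g' (wv j).
Definition Gfull_p (m : nat -> bool) (X : team M) := forall j, m j = true -> forall ds, length ds = ar occ j ->
  exists g, X g /\ zm j 0 ds g.

Definition PInv (j : nat) (m : nat -> bool) (X : team M) : Prop :=
  (forall s, X s -> s cv = Some c0) /\
  (forall s, X s -> forall x, x < S N -> s x = None) /\
  (forall j', m j' = true -> j' < j) /\
  Gfun_p m X /\ Gfull_p m X.

Definition step (X : team M) j F : team M := team_supp (dupL Sg M X (zs j)) F (wv j).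

Lemma step_mem X j F s2 : step X j F s2 <->
  exists s g, X s /\ s2 = upd (updL Sg M s (zs j) g) (wv j) (F (updL Sg M s (zs j) g)).
Proof.
  unfold step. split.
  - intros [s1 [H1 ->]]. apply dupL_mem in H1. destruct H1 as [s [g [Hs ->]]]. eauto.
  - intros [s [g [Hs ->]]]. exists (updL Sg M s (zs j) g). split; auto. apply dupL_mem. eauto.
Qed.

Lemma step_out s g j F x : ~ In x (zs j) -> x <> wv j ->
  upd (updL Sg M s (zs j) g) (wv j) F x = s x.
Proof.
  intros H1 H2. unfold upd. destruct (Nat.eqb_spec x (wv j)); [congruence|]. apply updL_out. auto.
Qed.

Lemma step_in s g j F i : i < ar occ j ->
  upd (updL Sg M s (zs j) g) (wv j) F (zv j i) = Some (g (zv j i)).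
Proof.
  intros Hi. unfold upd. destruct (Nat.eqb_spec (zv j i) (wv j)).
  - exfalso. apply (wv_notin j). rewrite <- e. apply in_zs. eauto.
  - apply updL_in. apply in_zs. eauto.
Qed.

Lemma step_w s g j F : upd (updL Sg M s (zs j) g) (wv j) F (wv j) = Some F.
Proof. unfold upd. rewrite Nat.eqb_refl. auto. Qed.

Lemma step_inv X j m F : PInv j m X -> (exists s, X s) ->
  (forall s2 s2', step X j F s2 -> step X j F s2' ->
     (forall l, l < ar occ j -> s2 (zv j l) = s2' (zv j l)) -> s2 (wv j) = s2' (wv j)) ->
  PInv (S j) (setm m j) (step X j F) /\ (exists s, step X j F s).
Proof.
  intros [P1 [P2 [P3 [P4 P5]]]] [s0 Hs0] Hfun.
  assert (Hne : forall s g, X s -> step X j F (upd (updL Sg M s (zs j) g) (wv j) (F (updL Sg M s (zs j) g)))).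
  { intros s g Hs. apply step_mem. eauto. }
  split; [|exists (upd (updL Sg M s0 (zs j) (fun _ => d0)) (wv j) (F (updL Sg M s0 (zs j) (fun _ => d0)))); auto].
  split; [|split; [|split; [|split]]].
  - intros s2 H. apply step_mem in H. destruct H as [s [g [Hs ->]]].
    destruct (low_notin j cv (or_intror eq_refl)). rewrite step_out; auto.
  - intros s2 H x Hx. apply step_mem in H. destruct H as [s [g [Hs ->]]].
    destruct (low_notin j x (or_introl Hx)). rewrite step_out; auto.
  - intros j' Hj'. unfold setm in Hj'. destruct (Nat.eqb_spec j' j); [lia|]. apply P3 in Hj'. lia.
  - intros j' Hj' g2 g2' H H'. unfold setm in Hj'. destruct (Nat.eqb_spec j' j).
    + subst. apply Hfun; auto.
    + apply step_mem in H. destruct H as [s [g [Hs ->]]].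
      apply step_mem in H'. destruct H' as [s' [g' [Hs' ->]]].
      intros Hl. destruct (other_notin j j' K n ltac:(lia)) as [A B].
      unfold P3.wv at 2 4. rewrite !step_out by auto.
      apply P4; auto. intros l Hl'. pose proof (HK j').
      destruct (other_notin j j' l n ltac:(lia)) as [A' B'].
      specialize (Hl l Hl'). rewrite !step_out in Hl by auto. auto.
  - intros j' Hj' ds Hds. unfold setm in Hj'. destruct (Nat.eqb_spec j' j).
    + subst j'. set (g := fun x => nth (x - zv j 0) ds d0).
      exists (upd (updL Sg M s0 (zs j) g) (wv j) (F (updL Sg M s0 (zs j) g))). split; auto.
      apply zm_iff. intros i Hi. simpl. rewrite step_in by lia. unfold g. f_equal. f_equal.
      unfold P3.zv. lia.
    + destruct (P5 j' Hj' ds Hds) as [g0 [Hg0 Hz]].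
      exists (upd (updL Sg M g0 (zs j) (fun _ => d0)) (wv j) (F (updL Sg M g0 (zs j) (fun _ => d0)))).
      split; auto. apply zm_iff. rewrite zm_iff in Hz. intros i Hi. simpl.
      pose proof (HK j'). destruct (other_notin j j' i n ltac:(lia)) as [A B].
      rewrite step_out by auto. apply Hz. auto.
Qed.

Lemma step_sat X j p : id_sat M X (fold_right IAll (IEx (wv j) p) (zs j)) <->
  exists F, id_sat M (step X j F) p.
Proof. rewrite allZ_sat. reflexivity. Qed.

Lemma pre_sound body : forall fuel j m X, PInv j m X -> (exists s, X s) ->
  id_sat M X (pre Sg N K occ fuel j m body) ->
  exists m' G, PInv (j + fuel) m' G /\ (exists s, G s) /\ id_sat M G (body m').
Proof.
  induction fuel; intros j m X HP Hne H.
  - exists m, X. rewrite Nat.add_0_r. auto.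
  - simpl in H. replace (j + S fuel) with (S j + fuel) by lia.
    destruct H as [H|H].
    + apply (IHfuel (S j) m X); auto.
      destruct HP as [P1 [P2 [P3 P4]]]. split; [|split; [|split]]; auto.
      intros j' Hj'. apply P3 in Hj'. lia.
    + rewrite (step_sat X j) in H. destruct H as [F [HD H]].
      assert (Hfun : forall s2 s2', step X j F s2 -> step X j F s2' ->
         (forall l, l < ar occ j -> s2 (zv j l) = s2' (zv j l)) -> s2 (wv j) = s2' (wv j)).
      { intros s2 s2' H2 H2' Hl. rewrite Dep_sem in HD.
        assert (W := HD s2 s2' H2 H2').
        apply step_mem in H2. destruct H2 as [s [g [Hs E]]].
        apply step_mem in H2'. destruct H2' as [s' [g' [Hs' E']]].
        assert (Wv : wagree Sg M s2 s2' (wv j)).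
        { apply W. intros x Hx. apply in_zs in Hx. destruct Hx as [i [Hi ->]].
          intros d d' E1 E2. rewrite Hl in E1; auto. congruence. }
        rewrite E, E', !step_w. f_equal. apply Wv; [rewrite E | rewrite E']; apply step_w. }
      destruct (step_inv X j m F HP Hne Hfun) as [HP' Hne'].
      apply (IHfuel (S j) (setm m j) (step X j F)); auto.
Qed.

Definition Dec (X : team M) j ds := forall g, X g -> zm j 0 ds g -> ~ Wc j g.

Variable R : nat -> list (dom M) -> Prop.

Definition DecOK j (m : nat -> bool) X := forall j', j' < j -> forall ds, length ds = ar occ j' ->
  ((if m j' then Dec X j' ds else True) <-> R j' ds).

Definition zvals j (s : assignment M) : list (dom M) :=
  map (fun i => match s (zv j i) with Some d => d | None => d0 end) (seq 0 (ar occ j)).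

Lemma nth_map_seq {A} (f : nat -> A) n i d : i < n -> nth i (map f (seq 0 n)) d = f i.
Proof.
  intro H. rewrite (nth_indep _ d (f 0)) by (rewrite length_map, length_seq; auto).
  rewrite (map_nth f). rewrite seq_nth by auto. auto.
Qed.

Lemma zvals_zm j ds s : length ds = ar occ j -> zm j 0 ds s -> zvals j s = ds.
Proof.
  intros Hl Hz. rewrite zm_iff in Hz. apply nth_ext with (d := d0) (d' := d0).
  - unfold zvals. rewrite length_map, length_seq. auto.
  - intros i Hi. unfold zvals in *. rewrite length_map, length_seq in Hi.
    rewrite nth_map_seq by auto. specialize (Hz i ltac:(lia)). simpl in Hz. rewrite Hz. auto.
Qed.

Lemma zvals_ext j s s' : (forall i, i < ar occ j -> s (zv j i) = s' (zv j i)) -> zvals j s = zvals j s'.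
Proof.
  intros H. unfold zvals. apply map_ext_in. intros i Hi. apply in_seq in Hi. rewrite H by lia. auto.
Qed.

Lemma pre_complete body : forall fuel j m X, PInv j m X -> (exists s, X s) -> DecOK j m X ->
  (forall m' G, PInv (j + fuel) m' G -> (exists s, G s) -> DecOK (j + fuel) m' G -> id_sat M G (body m')) ->
  id_sat M X (pre Sg N K occ fuel j m body).
Proof.
  induction fuel; intros j m X HP Hne HD Hfin.
  - simpl. apply Hfin; rewrite ?Nat.add_0_r; auto.
  - replace (j + S fuel) with (S j + fuel) in Hfin by lia. simpl.
    destruct (classic (forall ds, length ds = ar occ j -> R j ds)) as [Hfull|Hnf].
    + left. apply IHfuel; auto.
      * destruct HP as [P1 [P2 [P3 P4]]]. split; [|split; [|split]]; auto.
        intros j' Hj'. apply P3 in Hj'. lia.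
      * intros j' Hj' ds Hds. destruct (Nat.eq_dec j' j).
        -- subst. destruct (m j) eqn:Em.
           ++ destruct HP as [_ [_ [P3 _]]]. apply P3 in Em. lia.
           ++ split; auto.
        -- apply HD; auto. lia.
    + right. apply not_all_ex_not in Hnf. destruct Hnf as [ds' Hds'].
      apply imply_to_and in Hds'. destruct Hds' as [Hl' HR'].
      set (d1 := epsilon (inhabits c0) (fun d => d <> c0)).
      set (F := fun s => if excluded_middle_informative (R j (zvals j s)) then d1 else c0).
      apply (step_sat X j). exists F.
      assert (Hfun : forall s2 s2', step X j F s2 -> step X j F s2' ->
         (forall l, l < ar occ j -> s2 (zv j l) = s2' (zv j l)) -> s2 (wv j) = s2' (wv j)).
      { intros s2 s2' H2 H2' Hl.
        apply step_mem in H2. destruct H2 as [s [g [Hs E]]].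
        apply step_mem in H2'. destruct H2' as [s' [g' [Hs' E']]].
        rewrite E, E', !step_w. f_equal. unfold F. rewrite (zvals_ext j _ (updL Sg M s' (zs j) g')); auto.
        intros i Hi. specialize (Hl i Hi). rewrite E, E', !step_in in Hl by auto.
        rewrite !updL_in by (apply in_zs; eauto). auto. }
      destruct (step_inv X j m F HP Hne Hfun) as [HP' Hne'].
      split.
      * apply Dep_sem. intros s2 s2' H2 H2' Hag d d' E1 E2.
        assert (Hv : s2 (wv j) = s2' (wv j)).
        { apply Hfun; auto. intros l Hl.
          assert (Hx : In (zv j l) (zs j)) by (apply in_zs; eauto).
          apply step_mem in H2. destruct H2 as [s [g [Hs E]]].
          apply step_mem in H2'. destruct H2' as [s' [g' [Hs' E']]].
          specialize (Hag _ Hx). rewrite E, E' in *. rewrite !step_in in * by auto.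
          f_equal. apply Hag; rewrite ?step_in; auto. }
        congruence.
      * apply IHfuel; auto.
        intros j' Hj' ds Hds. unfold setm. destruct (Nat.eqb_spec j' j).
        -- subst j'. destruct HP' as [P1 [P2 [P3 [P4 P5]]]].
           assert (Hm : setm m j j = true) by (unfold setm; rewrite Nat.eqb_refl; auto).
           destruct (P5 j Hm ds Hds) as [g2 [Hg2 Hz]].
           assert (Key : forall g2, step X j F g2 -> zm j 0 ds g2 -> (Wc j g2 <-> ~ R j ds)).
           { intros h Hh Hzh. pose proof Hh as Hh'. apply step_mem in Hh'. destruct Hh' as [s [g [Hs ->]]].
             assert (Ez : zvals j (updL Sg M s (zs j) g) = ds).
             { apply zvals_zm; auto. rewrite zm_iff in *. intros i Hi. rewrite <- (Hzh i Hi).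
               simpl. rewrite step_in by lia. rewrite updL_in; auto. apply in_zs. exists i. split; auto. lia. }
             unfold Wc, P5.Wc. rewrite step_w. rewrite (P1 _ Hh). unfold F. rewrite Ez.
             destruct (excluded_middle_informative (R j ds)) as [HR|HR].
             - split; [intros [d [E1 E2]]; exfalso|tauto].
               assert (Hd1 : d1 <> c0).
               { unfold d1. apply epsilon_spec.
                 destruct (classic (exists d, d <> c0)) as [Ex|NEx]; auto. exfalso.
                 apply HR'. replace ds' with ds; auto.
                 apply nth_ext with (d := d0) (d' := d0); [congruence|].
                 intros i Hi. transitivity c0; [|symmetry]; apply NNPP; intro Hn; apply NEx; eauto. }
               apply Hd1. congruence.
             - split; auto. intros _. exists c0. auto. }
           split.
           ++ intros Hdec. apply NNPP. intros HnR. apply (Hdec g2 Hg2 Hz). apply Key; auto.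
           ++ intros HR h Hh Hzh Hw. apply Key in Hw; auto.
        -- assert (Hj : j' < j) by lia. rewrite <- (HD j' Hj ds Hds).
           destruct (m j'); [|tauto]. unfold Dec. pose proof (HK j') as HKj.
           split.
           ++ intros H g Hg Hz Hw. destruct Hne as [s0 _].
              apply (H (upd (updL Sg M g (zs j) (fun _ => d0)) (wv j) (F (updL Sg M g (zs j) (fun _ => d0))))).
              ** apply step_mem. eauto.
              ** rewrite zm_iff in *. intros i Hi. simpl.
                 destruct (other_notin j j' i n ltac:(lia)) as [A B]. rewrite step_out by auto. apply Hz. auto.
              ** unfold P5.Wc in *. destruct (other_notin j j' K n ltac:(lia)) as [A B].
                 destruct (low_notin j cv (or_intror eq_refl)) as [A' B'].
                 unfold P3.wv in *. rewrite !step_out by auto. auto.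
           ++ intros H h Hh Hz Hw. apply step_mem in Hh. destruct Hh as [s [g [Hs ->]]].
              apply (H s Hs).
              ** rewrite zm_iff in *. intros i Hi. simpl.
                 destruct (other_notin j j' i n ltac:(lia)) as [A B]. rewrite <- (Hz i Hi).
                 simpl. rewrite step_out by auto. auto.
              ** unfold P5.Wc in *. destruct (other_notin j j' K n ltac:(lia)) as [A B].
                 destruct (low_notin j cv (or_intror eq_refl)) as [A' B'].
                 unfold P3.wv in *. rewrite !step_out in Hw by auto. auto.
Qed.

End PreSem.

End P7.
Import P7.

Module P8.

Section FV.
Variable Sg : signature.
Variable N K : nat.
Variable occ : list (nat * nat).

Definition relvar (m : nat -> bool) x := exists j, m j = true /\ (x = wv N K j \/ In x (zs N K occ j)).

Lemma fv_conjdep xs x : idfv (conjdep Sg xs) x -> In x xs.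
Proof. induction xs; simpl; [tauto|]. intros [H|H]; [left; auto|right; auto]. Qed.

Lemma fv_Dep xs y x : idfv (Dep Sg xs y) x -> In x xs \/ x = y.
Proof. unfold Dep. simpl. intros [H|H]; [left; apply fv_conjdep; auto|right; auto]. Qed.

Lemma fv_eqs j l args x : idfv (eqs Sg N K j l args) x ->
  (exists i, i < length args /\ x = zv N K j (l + i)) \/ (exists t, In t args /\ tfv t x).
Proof.
  revert l. induction args as [|t ts IH]; simpl; intros l H.
  - intuition.
  - destruct H as [[H|H]|H].
    + left. exists 0. split; [lia|]. rewrite Nat.add_0_r. auto.
    + right. eauto.
    + destruct (IH (S l) H) as [[i [Hi E]]|[t' [Ht' E]]].
      * left. exists (S i). split; [lia|]. rewrite E. f_equal. lia.
      * right. eauto.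
Qed.

Lemma fv_tr p : forall m sc pol x, vb Sg N occ p -> idfv (tr Sg N K occ m sc pol p) x ->
  In x sc \/ sofv p x \/ x = cv N \/ relvar m x.
Proof.
  induction p as [t1 t2|r a|i args|q IH|q IHq r IHr|q IHq r IHr|y q IH|y q IH|i k q IH|i k q IH];
    intros m sc pol x Hvb H; simpl tr in H.
  - destruct pol; unfold lit, ineg in H; simpl in H; simpl; intuition.
  - destruct pol; unfold lit, ineg in H; simpl in H; simpl; intuition.
  - destruct Hvb as [Targs Hin].
    set (j := idx (i, length args) occ) in H.
    assert (Har : ar occ j = length args) by (unfold ar, j; rewrite idx_nth; auto).
    destruct (m j) eqn:Em.
    + assert (E : idfv (eqs Sg N K j 0 args) x \/ x = wv N K j \/ x = cv N).
      { destruct pol; simpl in H; unfold wc in H; simpl in H; intuition. }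
      destruct E as [E|[E|E]].
      * apply fv_eqs in E. destruct E as [[l [Hl E]]|[t [Ht E]]].
        -- right; right; right. exists j. split; auto. right. apply in_zs. exists l. split; [lia|auto].
        -- right; left. simpl. eauto.
      * right; right; right. exists j. auto.
      * auto.
    + destruct pol; simpl in H; intuition.
  - simpl. eapply IH; eauto.
  - destruct Hvb as [Vq Vr]. simpl sofv.
    destruct pol.
    + simpl in H. destruct H as [H|H]; [destruct (IHq m sc true x)|destruct (IHr m sc true x)]; intuition.
    + unfold Disj in H. cbn [idfv] in H.
      destruct H as [[H|H]|[[H|[[H|H]|[H|H]]] Hu]].
      * destruct (IHq m sc false x); intuition.
      * destruct (IHr m sc false x); intuition.
      * apply fv_Dep in H. destruct H as [H|H]; [apply in_remove in H; tauto|congruence].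
      * unfold uc in H. simpl in H. destruct H; [congruence|auto].
      * destruct (IHq m (uv N :: sc) false x) as [E|E]; auto; [destruct E as [E|E]; [congruence|auto]|intuition].
      * unfold ineg, uc in H. simpl in H. destruct H as [[E|E]|[]]; [congruence| right; right; left; auto].
      * destruct (IHr m (uv N :: sc) false x) as [E|E]; auto; [destruct E as [E|E]; [congruence|auto]|intuition].
  - destruct Hvb as [Vq Vr]. simpl sofv.
    destruct pol.
    + unfold Disj in H. cbn [idfv] in H.
      destruct H as [[H|H]|[[H|[[H|H]|[H|H]]] Hu]].
      * destruct (IHq m sc true x); intuition.
      * destruct (IHr m sc true x); intuition.
      * apply fv_Dep in H. destruct H as [H|H]; [apply in_remove in H; tauto|congruence].
      * unfold uc in H. simpl in H. destruct H; [congruence|auto].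
      * destruct (IHq m (uv N :: sc) true x) as [E|E]; auto; [destruct E as [E|E]; [congruence|auto]|intuition].
      * unfold ineg, uc in H. simpl in H. destruct H as [[E|E]|[]]; [congruence| right; right; left; auto].
      * destruct (IHr m (uv N :: sc) true x) as [E|E]; auto; [destruct E as [E|E]; [congruence|auto]|intuition].
    + simpl in H. destruct H as [H|H]; [destruct (IHq m sc false x)|destruct (IHr m sc false x)]; intuition.
  - destruct Hvb as [Hy Vq]. simpl sofv.
    destruct pol; cbn [idfv] in H.
    + destruct H as [H Hne]. destruct (IH m (y :: sc) true x Vq H) as [E|[E|E]]; [destruct E as [E|E]; [congruence|auto]|right; left; split; auto|tauto].
    + destruct H as [[H|H] Hne].
      * apply fv_Dep in H. destruct H as [H|H]; [apply in_remove in H; tauto|congruence].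
      * destruct (IH m (y :: sc) false x Vq H) as [E|[E|E]]; [destruct E as [E|E]; [congruence|auto]|right; left; split; auto|tauto].
  - destruct Hvb as [Hy Vq]. simpl sofv.
    destruct pol; cbn [idfv] in H.
    + destruct H as [[H|H] Hne].
      * apply fv_Dep in H. destruct H as [H|H]; [apply in_remove in H; tauto|congruence].
      * destruct (IH m (y :: sc) true x Vq H) as [E|[E|E]]; [destruct E as [E|E]; [congruence|auto]|right; left; split; auto|tauto].
    + destruct H as [H Hne]. destruct (IH m (y :: sc) false x Vq H) as [E|[E|E]]; [destruct E as [E|E]; [congruence|auto]|right; left; split; auto|tauto].
  - destruct Hvb.
  - destruct Hvb.
Qed.

Lemma fv_allZ zs (p : idform Sg) x : idfv (fold_right IAll p zs) x -> idfv p x /\ ~ In x zs.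
Proof.
  induction zs; simpl; [tauto|]. intros [H Hne]. apply IHzs in H. intuition.
Qed.

Lemma fv_pre body : forall fuel j m x, idfv (pre Sg N K occ fuel j m body) x ->
  (forall m', idfv (body m') x -> x = cv N \/ relvar m' x) ->
  x = cv N \/ relvar m x.
Proof.
  induction fuel; simpl; intros j m x H Hb; [auto|].
  destruct H as [H|H]; [eapply IHfuel; eauto|].
  apply fv_allZ in H. destruct H as [[[H|H] Hw] Hz].
  - apply fv_Dep in H. tauto.
  - destruct (IHfuel (S j) (setm m j) x H Hb) as [E|[j' [Hm E]]]; auto.
    unfold setm in Hm. destruct (Nat.eqb_spec j' j).
    + subst. exfalso. tauto.
    + right. exists j'. auto.
Qed.

End FV.

End P8.
Import P8.

Module P9.

Section Bounds.
Variable Sg : signature.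

Fixpoint occs (p : soform Sg) : list (nat * nat) :=
  match p with
  | SVar i args => [(i, length args)]
  | SNeg q | SAll _ q | SEx _ q | SAll2 _ _ q | SEx2 _ _ q => occs q
  | SAnd q r | SOr q r => occs q ++ occs r
  | _ => []
  end.

Lemma sofv2_occs p i k : sofv2 p i k -> In (i, k) (occs p).
Proof.
  induction p; simpl; try tauto; intros H; try (destruct H; subst; auto; fail); try (apply in_or_app; tauto); try tauto.
Qed.

Lemma fin_bound n (P : Fin.t n -> nat -> Prop) :
  (forall j, exists N, forall N', N <= N' -> P j N') -> exists N, forall j N', N <= N' -> P j N'.
Proof.
  induction n; intros H.
  - exists 0. intros j. apply Fin.case0. exact j.
  - destruct (H Fin.F1) as [N1 H1].
    destruct (IHn (fun j => P (Fin.FS j))) as [N2 H2]; [intro j; apply H|].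
    exists (max N1 N2). intros j.
    apply (Fin.caseS' j (fun j => forall N', max N1 N2 <= N' -> P j N')).
    + intros N' HN'. apply H1. lia.
    + intros j' N' HN'. apply H2. lia.
Qed.

Lemma term_bound (t : term Sg) : exists N, forall y, tfv t y -> y < N.
Proof.
  induction t as [x|f a IH].
  - exists (S x). simpl. intros y ->. lia.
  - destruct (fin_bound _ (fun j N => forall y, tfv (a j) y -> y < N)) as [N HN].
    + intros j. destruct (IH j) as [N HN]. exists N. intros N' HN' y Hy. specialize (HN y Hy). lia.
    + exists N. simpl. intros y [j Hy]. apply (HN j N); auto.
Qed.

Lemma tb_mono N N' (t : term Sg) : tb Sg N t -> N <= N' -> tb Sg N' t.
Proof. unfold tb. intros H Hle y Hy. specialize (H y Hy). lia. Qed.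

Lemma list_bound (l : list (term Sg)) : exists N, forall t, In t l -> forall y, tfv t y -> y < N.
Proof.
  induction l as [|t l IH]; simpl.
  - exists 0. tauto.
  - destruct IH as [N1 H1]. destruct (term_bound t) as [N2 H2].
    exists (max N1 N2). intros t' [<-|Ht] y Hy; [specialize (H2 y Hy)|specialize (H1 t' Ht y Hy)]; lia.
Qed.

Lemma vb_exists (occ : list (nat * nat)) (p : soform Sg) : is_fo p -> incl (occs p) occ ->
  exists N, forall N', N <= N' -> vb Sg N' occ p.
Proof.
  induction p; simpl; intros Hfo Hinc.
  - destruct (term_bound t) as [N1 H1]. destruct (term_bound t0) as [N2 H2].
    exists (max N1 N2). intros N' HN. split; intros y Hy; [specialize (H1 y Hy)|specialize (H2 y Hy)]; lia.
  - destruct (fin_bound _ (fun j N => tb Sg N (t j))) as [N HN].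
    + intros j. destruct (term_bound (t j)) as [N H]. exists N. intros N' HN'. apply (tb_mono N); auto.
    + exists N. intros N' HN' j. apply HN. auto.
  - destruct (list_bound l) as [N HN]. exists N. intros N' HN'. split.
    + intros t Ht y Hy. specialize (HN t Ht y Hy). lia.
    + apply Hinc. simpl. auto.
  - apply IHp; auto.
  - destruct Hfo as [F1 F2]. destruct (IHp1 F1) as [N1 H1]; [intros x Hx; apply Hinc; apply in_or_app; auto|].
    destruct (IHp2 F2) as [N2 H2]; [intros x Hx; apply Hinc; apply in_or_app; auto|].
    exists (max N1 N2). intros N' HN'. split; [apply H1|apply H2]; lia.
  - destruct Hfo as [F1 F2]. destruct (IHp1 F1) as [N1 H1]; [intros x Hx; apply Hinc; apply in_or_app; auto|].
    destruct (IHp2 F2) as [N2 H2]; [intros x Hx; apply Hinc; apply in_or_app; auto|].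
    exists (max N1 N2). intros N' HN'. split; [apply H1|apply H2]; lia.
  - destruct (IHp Hfo Hinc) as [N1 H1]. exists (max N1 (S n)). intros N' HN'. split; [lia|apply H1; lia].
  - destruct (IHp Hfo Hinc) as [N1 H1]. exists (max N1 (S n)). intros N' HN'. split; [lia|apply H1; lia].
  - destruct Hfo.
  - destruct Hfo.
Qed.

Lemma idx_lt (p : nat * nat) l : In p l -> idx p l < length l.
Proof.
  induction l as [|q qs IH]; simpl; [tauto|]. intros [<-|H].
  - rewrite !Nat.eqb_refl. simpl. lia.
  - destruct ((fst q =? fst p) && (snd q =? snd p)); [lia|]. specialize (IH H). lia.
Qed.

Lemma ar_le (occ : list (nat * nat)) j : ar occ j <= list_max (map snd occ).
Proof.
  unfold ar. destruct (Nat.lt_ge_cases j (length occ)) as [H|H].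
  - assert (F : Forall (fun k => k <= list_max (map snd occ)) (map snd occ)) by (apply list_max_le; auto).
    rewrite Forall_forall in F. apply F. apply in_map. apply nth_In. auto.
  - rewrite nth_overflow by auto. simpl. lia.
Qed.

End Bounds.

End P9.
Import P9.


Lemma neg_empty (Sg : signature) (M : structure Sg) (p : idform Sg) :
  id_sat M (empty_team M) (IImp p IBot) <-> ~ id_sat M (empty_team M) p.
Proof.
  simpl. split.
  - intros H Hp. apply (H (empty_team M) (fun s h => h) Hp (empty_assignment M)). reflexivity.
  - intros Hn Y HY Hp s Hs. apply Hn.
    replace (empty_team M) with Y; auto.
    apply team_ext. intros t. split; [apply HY|].
    intros Ht. unfold empty_team in Ht. subst t. pose proof (HY s Hs) as E. unfold empty_team in E. subst. auto.
Qed.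

Lemma init_PInv (Sg : signature) (M : structure Sg) N K occ (F : assignment M -> dom M) :
  PInv Sg M N K occ (F (empty_assignment M)) 0 (fun _ => false) (team_supp (empty_team M) F (cv N)) /\
  exists s, team_supp (empty_team M) F (cv N) s.
Proof.
  split.
  - split; [|split; [|split; [|split]]].
    + intros s [s0 [E ->]]. unfold empty_team in E. subst. unfold upd. rewrite Nat.eqb_refl. auto.
    + intros s [s0 [E ->]] x Hx. unfold empty_team in E. subst. unfold upd.
      destruct (Nat.eqb_spec x (cv N)); [unfold P3.cv in *; lia|auto].
    + intros j H. discriminate.
    + intros j H. discriminate.
    + intros j H. discriminate.
  - exists (upd (empty_assignment M) (cv N) (F (empty_assignment M))). exists (empty_assignment M). split; reflexivity.
Qed.

Lemma inv_G (Sg : signature) (M : structure Sg) N K occ c0 j m G :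
  PInv Sg M N K occ c0 j m G -> inv Sg M N G G [].
Proof.
  intros [P1 [P2 _]]. split; [|split; [|split]].
  - simpl. tauto.
  - intros s Hs x Hx. rewrite P2 by auto. simpl. tauto.
  - intros s Hs. exists s. auto.
  - intros s g Hs Hg. exists g. split; auto. split; auto.
    intros x Hx. rewrite !P2; auto.
Qed.

Theorem corollary4p8 :
  forall (S : signature) (psi : soform S),
    pi11_sentence psi ->
    exists phi : idform S,
      id_sentence phi /\
      forall M : structure S,
        so_models M psi <-> id_sat M (empty_team M) phi.
Proof.
  intros Sg psi [Hpi [Hfv _]].
  set (th := strip Sg psi).
  set (occ := occs Sg th).
  set (K := list_max (map snd occ)).
  destruct (vb_exists Sg occ th (strip_fo Sg psi Hpi) (incl_refl _)) as [N HN].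
  specialize (HN N (Nat.le_refl N)).
  assert (HK : forall j, ar occ j <= K) by (intro; apply ar_le).
  assert (Hcl : forall x, ~ sofv th x) by (intros x Hx; apply (Hfv x); apply strip_fv; auto).
  set (body := fun m => tr Sg N K occ m [] false th).
  set (Sig := IEx (cv N) (pre Sg N K occ (length occ) 0 (fun _ => false) body)).
  exists (IImp Sig IBot). split.
  - intros x Hx. simpl in Hx. destruct Hx as [[Hx Hc]|[]].
    destruct (fv_pre Sg N K occ body (length occ) 0 (fun _ => false) x Hx) as [E|[j [E _]]].
    + intros m' Hb. destruct (fv_tr Sg N K occ th m' [] false x HN Hb) as [E|[E|E]]; [destruct E|destruct (Hcl x E)|auto].
    + auto.
    + discriminate.
  - intros M.
    set (d0 := epsilon (dom_ne _ M) (fun _ => True)).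
    unfold so_models. rewrite (strip_sem Sg M psi). fold th.
    rewrite neg_empty. split.
    + intros H [F HF]. fold body in HF.
      destruct (init_PInv Sg M N K occ F) as [HP Hne].
      destruct (pre_sound Sg M N K occ d0 (F (empty_assignment M)) HK body (length occ) 0 _ _ HP Hne HF)
        as [m' [G [[P1 [P2 [P3 [P4 P5]]]] [[s Hs] Hb]]]].
      pose proof (inv_G Sg M N K occ _ _ m' G (conj P1 (conj P2 (conj P3 (conj P4 P5))))) as HI.
      unfold body in Hb. rewrite (fo_main Sg M N K occ d0 G (F (empty_assignment M)) m' P1 P4 P5 th false [] G HN
                 ltac:(intros x Hx; destruct (Hcl x Hx)) HI) in Hb.
      apply (Hb s Hs). apply H.
    + intros Hn v V. apply NNPP. intros Hv. apply Hn.
      exists (fun _ => d0).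
      destruct (init_PInv Sg M N K occ (fun _ => d0)) as [HP Hne].
      apply (pre_complete Sg M N K occ d0 d0 HK
               (fun j ds => V (fst (nth j occ (0,0))) (snd (nth j occ (0,0))) ds)
               body (length occ) 0 _ _ HP Hne).
      * intros j' Hj'. lia.
      * intros m' G HP' HneG HD. destruct HP' as [P1 [P2 [P3 [P4 P5]]]].
        pose proof (inv_G Sg M N K occ _ _ m' G (conj P1 (conj P2 (conj P3 (conj P4 P5))))) as HI.
        unfold body. rewrite (fo_main Sg M N K occ d0 G d0 m' P1 P4 P5 th false [] G HN
                 ltac:(intros x Hx; destruct (Hcl x Hx)) HI).
        intros s Hs Hso. apply Hv.
        rewrite (so_agree Sg M th v (valN Sg M N d0 s) V (Vdec Sg M N K occ G m')); auto.
        -- intros x Hx. destruct (Hcl x Hx).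
        -- intros i k l Hik Hl.
           assert (Hin : In (i, k) occ) by (apply sofv2_occs; auto).
           pose proof (idx_lt (i, k) occ Hin) as Hlt.
           pose proof (idx_nth (i, k) occ Hin) as Hnth.
           assert (Har : ar occ (idx (i, k) occ) = k) by (unfold ar; rewrite Hnth; auto).
           specialize (HD (idx (i, k) occ) ltac:(simpl; lia) l ltac:(congruence)).
           simpl in HD. rewrite Hnth in HD. simpl in HD.
           unfold Vdec. simpl. rewrite <- HD. unfold Dec. tauto.
Qed.
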